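(* Let $f,g\in C^{2}[0,1]$ be real-valued. Then for all $x\in[0,1]$ and $n\in\mathbb{N}$, $$n\left|B_{n}(fg)(x)-B_{n}(f)(x)B_{n}(g)(x)-\frac{x(1-x)}{n}f'(x)g'(x)\right|$$ $$\le\frac{x(1-x)}{2}\left[\tilde{\omega}_{1}\Big((fg)'';\frac{1}{3\sqrt{n}}\Big)+\|g\|\,\tilde{\omega}_{1}\Big(f'';\frac{1}{3\sqrt{n}}\Big)+\|f\|\,\tilde{\omega}_{1}\Big(g'';\frac{1}{3\sqrt{n}}\Big)+\frac{1}{2n}\|f''\|\,\|g''\|\right].$$
   Context: For $f:[0,1]\to\mathbb{R}$ the Bernstein polynomials are $B_{n}(f)(x)=\sum_{k=0}^{n}\binom{n}{k}x^{k}(1-x)^{n-k}f(k/n)$. $\|\cdot\|$ denotes the uniform norm on $C[0,1]$. For $h\in C[0,1]$, $\omega_{1}(h;t)=\sup\{|h(x)-h(y)|: x,y\in[0,1],|x-y|\le t\}$ is the first-order modulus of continuity, and $\tilde{\omega}_{1}(h;\cdot)$ denotes its least concave majorant. *)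

(* Defs.v *)
From HB Require Import structures.
From mathcomp Require Import all_boot all_order all_algebra.
From mathcomp Require Import all_classical all_reals all_analysis.
Set Implicit Arguments. Unset Strict Implicit. Unset Printing Implicit Defensive.
Import Order.TTheory GRing.Theory Num.Theory.
Import numFieldNormedType.Exports.
Local Open Scope classical_set_scope.
Local Open Scope ring_scope.

Section Defs.
Variable R : realType.

Definition I01 : set R := [set x | 0 <= x <= 1].

Definition bernstein (n : nat) (f : R -> R) (x : R) : R :=
  \sum_(k < n.+1) ('C(n, k))%:R * x ^+ k * (1 - x) ^+ (n - k) * f (k%:R / n%:R).

Definition unorm (h : R -> R) : R := sup [set `|h x| | x in I01].

Definition omega1 (h : R -> R) (t : R) : R :=
  sup [set d | exists x y, [/\ I01 x, I01 y, `|x - y| <= t & d = `|h x - h y|]].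

Definition concave_nonneg (phi : R -> R) : Prop :=
  forall a b l, 0 <= a -> 0 <= b -> 0 <= l <= 1 ->
    l * phi a + (1 - l) * phi b <= phi (l * a + (1 - l) * b).

Definition omega1_tilde (h : R -> R) (t : R) : R :=
  inf [set phi t | phi in [set phi : R -> R | concave_nonneg phi /\
         (forall s, 0 <= s -> omega1 h s <= phi s)]].

Definition deriv01 (f df : R -> R) : Prop :=
  forall x, I01 x ->
    (fun y => (f y - f x) / (y - x)) @ within I01 (nbhs x^') --> df x.

End Defs.

(* Main.v *)
Require Import Defs.
From HB Require Import structures.
From mathcomp Require Import all_boot all_order all_algebra.
From mathcomp Require Import all_classical all_reals all_analysis.
From mathcomp Require Import ring lra.
Import Order.TTheory GRing.Theory Num.Theory.
Import numFieldNormedType.Exports.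
Local Open Scope classical_set_scope.
Local Open Scope ring_scope.

Set Implicit Arguments. Unset Strict Implicit. Unset Printing Implicit Defensive.

Section P1.
Variable R : realType.
Implicit Types (F : R -> R).

Lemma deriv01_ed F (F1 : R -> R) x : deriv01 F F1 -> I01 x ->
  forall e, 0 < e -> exists2 d, 0 < d &
   forall y, @I01 R y -> y != x -> `|y - x| < d ->
     `|F1 x - (F y - F x) / (y - x)| < e.
Proof.
move=> hF Ix e e0.
have := hF x Ix; move/cvgrPdist_lt => /(_ e e0).
rewrite near_withinE /= => H.
move: H => /nbhs_ballP [d d0 Hd].
exists d => // y Iy yx yd.
have := Hd y _ yx Iy. apply.
by rewrite /ball /= distrC.
Qed.


Lemma deriv01_cont F (F1 : R -> R) : deriv01 F F1 -> {within @I01 R, continuous F}.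
Proof.
move=> hF; apply/subspace_continuousP => x Ix.
apply/cvgrPdist_lt => e e0.
have [d d0 Hd] := deriv01_ed hF Ix (ltr01).
rewrite near_withinE /=; apply/nbhs_ballP.
exists (Num.min d (e / (`|F1 x| + 1))) => /=.
  by rewrite lt_min d0 divr_gt0 // ltr_pwDr.
move=> y; rewrite /ball /= lt_min => /andP[yd ye] Iy.
have [->|yx] := eqVneq y x; first by rewrite subrr normr0.
have := Hd y Iy yx; rewrite distrC => /(_ yd) H.
have yx0 : y - x != 0 by rewrite subr_eq0.
have -> : F x - F y = - ((F y - F x) / (y - x)) * (y - x) by rewrite mulNr divfK // opprB.
rewrite normrM normrN.
have H2 : `|(F y - F x) / (y - x)| <= `|F1 x| + 1.
  have -> : (F y - F x) / (y - x) = F1 x - (F1 x - (F y - F x) / (y - x)) by set q := (F y - F x) / (y - x); ring.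
  by rewrite (le_trans (ler_normB _ _)) // lerD2l ltW.
have pos : 0 < `|F1 x| + 1 by rewrite ltr_pwDr.
apply: (le_lt_trans (ler_pM _ _ H2 (lexx _))) => //.
rewrite distrC in ye.
by rewrite mulrC -ltr_pdivlMr.
Qed.

Lemma deriv01_is_derive F (F1 : R -> R) (x : R) : deriv01 F F1 -> 0 < x < 1 ->
  is_derive x 1 F (F1 x).
Proof.
move=> hF /andP[x0 x1].
have Ix : @I01 R x by rewrite /I01 /= !ltW.
apply/is_derive1_caratheodory.
exists (fun z => if z == x then F1 x else (F z - F x) / (z - x)); split.
- move=> z; case: eqP => [->|/eqP]; first by rewrite !subrr mulr0.
  by rewrite -subr_eq0 => /divfK->.
- apply/continuous_withinNx; rewrite eqxx.
  apply/cvgrPdist_lt => e e0.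
  have [d d0 Hd] := deriv01_ed hF Ix e0.
  rewrite near_withinE /=; apply/nbhs_ballP.
  exists (Num.min d (Num.min x (1 - x))) => /=.
    by rewrite !lt_min d0 x0 subr_gt0 x1.
  move=> y; rewrite /ball /= !lt_min => /andP[yd /andP[yx0 yx1]] yx.
  rewrite (negbTE yx); apply: Hd => //; last by rewrite distrC.
  rewrite /I01 /=; move: yx0 yx1; rewrite !ltr_norml => /andP[a b] /andP[c d1].
  apply/andP; split; lra.
- by rewrite eqxx.
Qed.

End P1.

Section P2.
Variable R : realType.

Lemma incrG (D D1 : R -> R) (a b : R) : a <= b ->
  (forall u, u \in `]a, b[ -> is_derive u 1 D (D1 u)) ->
  (forall u, u \in `]a, b[ -> 0 <= D1 u) ->
  {within `[a, b], continuous D} -> D a <= D b.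
Proof.
move=> ab hd hpos hc.
move: ab; rewrite le_eqVlt => /predU1P[<-//|ab].
have [c cab e] := MVT ab hd hc.
rewrite -subr_ge0 e.
by rewrite mulr_ge0 ?(hpos c cab) // subr_ge0 ltW.
Qed.

Lemma deriv_cont (q dq : R -> R) : (forall u : R, is_derive u 1 q (dq u)) -> continuous q.
Proof.
move=> h u; apply: differentiable_continuous.
by apply/derivable1_diffP; case: (h u).
Qed.

Lemma I01_itv (a b : R) : 0 <= a -> b <= 1 -> `[a, b] `<=` @I01 R.
Proof.
move=> a0 b1 u /=; rewrite in_itv /= => /andP[h1 h2]; rewrite /I01 /=.
apply/andP; split; [exact: le_trans h1|exact: le_trans b1].
Qed.

Lemma incrG2 (q dq F F1 : R -> R) (s a b : R) : 0 <= a -> a <= b -> b <= 1 ->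
  (forall u : R, is_derive u 1 q (dq u)) -> deriv01 F F1 ->
  (forall u, a < u < b -> 0 <= dq u + s * F1 u) ->
  q a + s * F a <= q b + s * F b.
Proof.
move=> a0 ab b1 hq hF hpos.
apply: (@incrG (fun u => q u + s * F u) (fun u => dq u + s * F1 u)) => //.
- move=> u; rewrite in_itv /= => /andP[au ub].
  have hFu : is_derive u 1 F (F1 u).
    apply: deriv01_is_derive => //; apply/andP; split; lra.
  have hqu := hq u.
  apply: is_derive_eq; rewrite /GRing.scale /=; ring.
- apply: (continuous_subspaceW (I01_itv a0 b1)).
  move=> x; apply: cvgD.
    by apply: continuous_subspaceT; exact: deriv_cont hq.
  apply: cvgMr.
  exact: deriv01_cont hF x.
Qed.


Lemma sgn_le (s y : R) : s = 1 \/ s = -1 -> s * y <= `|y|.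
Proof. by case=> ->; rewrite ?mul1r ?mulN1r ?ler_norm ?ler_normr ?lexx ?orbT. Qed.

Lemma taylor_right_s (F F1 F2 : R -> R) (K A m c x t s : R) :
  0 <= x -> x <= t -> t <= 1 -> deriv01 F F1 -> deriv01 F1 F2 ->
  s = 1 \/ s = -1 ->
  (forall u, x < u < t -> `|F2 u - K| <= A + m * ((u - x) - c)) ->
  s * (F t - F x - F1 x * (t - x) - K * (t - x)^+2 / 2) <=
    A * (t - x)^+2 / 2 + m * ((t - x)^+3 / 6 - c * (t - x)^+2 / 2).
Proof.
move=> x0 xt t1 hF hF1 hs hb.
pose d1 u := A * (u - x) + m * ((u - x)^+2 / 2 - c * (u - x))
             - s * (F1 u - F1 x - K * (u - x)).
have step1 : forall u, x <= u -> u <= t -> 0 <= d1 u.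
  move=> u xu ut.
  have := @incrG2 (fun u => A * (u - x) + m * ((u - x)^+2 / 2 - c * (u - x))
                   + s * (F1 x + K * (u - x)))
    (fun u => A + m * ((u - x) - c) + s * K) F1 F2 (- s) x u x0 xu (le_trans ut t1).
  have -> : A * (x - x) + m * ((x - x) ^+ 2 / 2 - c * (x - x)) + s * (F1 x + K * (x - x)) +
     - s * F1 x = 0 by ring.
  rewrite /d1.
  have -> : A * (u - x) + m * ((u - x) ^+ 2 / 2 - c * (u - x)) + s * (F1 x + K * (u - x)) +
     - s * F1 u = A * (u - x) + m * ((u - x) ^+ 2 / 2 - c * (u - x)) -
     s * (F1 u - F1 x - K * (u - x)) by ring.
  apply => //.
    move=> v; apply: is_derive_eq; rewrite /GRing.scale /=; field; done.
  move=> v /andP[xv vu].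
  have := hb v; rewrite xv (lt_le_trans vu ut) => /(_ isT) h.
  have := sgn_le (F2 v - K) hs.
  move=> h2.
  have -> : A + m * (v - x - c) + s * K + - s * F2 v = (A + m * (v - x - c)) - s * (F2 v - K) by ring.
  rewrite subr_ge0; exact: le_trans h2 h.
have := @incrG2 (fun u => A * (u - x)^+2 / 2 + m * ((u - x)^+3 / 6 - c * (u - x)^+2 / 2)
                  + s * (F x + F1 x * (u - x) + K * (u - x)^+2 / 2))
    (fun u => A * (u - x) + m * ((u - x)^+2 / 2 - c * (u - x)) + s * (F1 x + K * (u - x)))
    F F1 (- s) x t x0 xt t1.
have -> : A * (x - x) ^+ 2 / 2 + m * ((x - x) ^+ 3 / 6 - c * (x - x) ^+ 2 / 2) +
    s * (F x + F1 x * (x - x) + K * (x - x) ^+ 2 / 2) + - s * F x = 0 by ring.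
move=> h; rewrite -subr_ge0.
have -> : A * (t - x) ^+ 2 / 2 + m * ((t - x) ^+ 3 / 6 - c * (t - x) ^+ 2 / 2) -
   s * (F t - F x - F1 x * (t - x) - K * (t - x) ^+ 2 / 2) =
   A * (t - x) ^+ 2 / 2 + m * ((t - x) ^+ 3 / 6 - c * (t - x) ^+ 2 / 2) +
    s * (F x + F1 x * (t - x) + K * (t - x) ^+ 2 / 2) + - s * F t by ring.
apply: h => //.
  move=> v; apply: is_derive_eq; rewrite /GRing.scale /=; field; done.
move=> v /andP[xv vt].
have := step1 v (ltW xv) (ltW vt); rewrite /d1.
suff -> : A * (v - x) + m * ((v - x) ^+ 2 / 2 - c * (v - x)) + s * (F1 x + K * (v - x)) +
   - s * F1 v = A * (v - x) + m * ((v - x) ^+ 2 / 2 - c * (v - x)) -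
   s * (F1 v - F1 x - K * (v - x)) by [].
ring.
Qed.


Lemma taylor_left_s (F F1 F2 : R -> R) (K A m c x t s : R) :
  0 <= t -> t <= x -> x <= 1 -> deriv01 F F1 -> deriv01 F1 F2 ->
  s = 1 \/ s = -1 ->
  (forall u, t < u < x -> `|F2 u - K| <= A + m * ((x - u) - c)) ->
  s * (F t - F x - F1 x * (t - x) - K * (t - x)^+2 / 2) <=
    A * (x - t)^+2 / 2 + m * ((x - t)^+3 / 6 - c * (x - t)^+2 / 2).
Proof.
move=> t0 tx x1 hF hF1 hs hb.
pose d1 u := - (A * (x - u) + m * ((x - u)^+2 / 2 - c * (x - u)))
             - s * (F1 u - F1 x - K * (u - x)).
have step1 : forall u, t <= u -> u <= x -> d1 u <= 0.
  move=> u tu ux.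
  have := @incrG2 (fun u => - (A * (x - u) + m * ((x - u)^+2 / 2 - c * (x - u)))
                   + s * (F1 x + K * (u - x)))
    (fun u => A + m * ((x - u) - c) + s * K) F1 F2 (- s) u x (le_trans t0 tu) ux x1.
  have -> : - (A * (x - x) + m * ((x - x) ^+ 2 / 2 - c * (x - x))) + s * (F1 x + K * (x - x)) +
     - s * F1 x = 0 by ring.
  rewrite /d1.
  have -> : - (A * (x - u) + m * ((x - u) ^+ 2 / 2 - c * (x - u))) + s * (F1 x + K * (u - x)) +
     - s * F1 u = - (A * (x - u) + m * ((x - u) ^+ 2 / 2 - c * (x - u))) -
     s * (F1 u - F1 x - K * (u - x)) by ring.
  apply => //.
    move=> v; apply: is_derive_eq; rewrite /GRing.scale /=; field; done.
  move=> v /andP[uv vx].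
  have := hb v; rewrite vx (le_lt_trans tu uv) => /(_ isT) h.
  have := sgn_le (F2 v - K) hs.
  move=> h2.
  have -> : A + m * (x - v - c) + s * K + - s * F2 v = (A + m * (x - v - c)) - s * (F2 v - K) by ring.
  rewrite subr_ge0; exact: le_trans h2 h.
have := @incrG2 (fun u => - (A * (x - u)^+2 / 2 + m * ((x - u)^+3 / 6 - c * (x - u)^+2 / 2))
                  - s * (F x + F1 x * (u - x) + K * (u - x)^+2 / 2))
    (fun u => A * (x - u) + m * ((x - u)^+2 / 2 - c * (x - u)) - s * (F1 x + K * (u - x)))
    F F1 s t x t0 tx x1.
have -> : - (A * (x - x) ^+ 2 / 2 + m * ((x - x) ^+ 3 / 6 - c * (x - x) ^+ 2 / 2)) -
    s * (F x + F1 x * (x - x) + K * (x - x) ^+ 2 / 2) + s * F x = 0 by ring.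
move=> h; rewrite -subr_ge0 -oppr_le0.
have -> : - (A * (x - t) ^+ 2 / 2 + m * ((x - t) ^+ 3 / 6 - c * (x - t) ^+ 2 / 2) -
   s * (F t - F x - F1 x * (t - x) - K * (t - x) ^+ 2 / 2)) =
   - (A * (x - t) ^+ 2 / 2 + m * ((x - t) ^+ 3 / 6 - c * (x - t) ^+ 2 / 2)) -
    s * (F x + F1 x * (t - x) + K * (t - x) ^+ 2 / 2) + s * F t by ring.
apply: h => //.
  move=> v; apply: is_derive_eq; rewrite /GRing.scale /=; field; done.
move=> v /andP[tv vx].
have := step1 v (ltW tv) (ltW vx); rewrite /d1.
move=> h; rewrite -oppr_le0.
suff -> : - (A * (x - v) + m * ((x - v) ^+ 2 / 2 - c * (x - v)) - s * (F1 x + K * (v - x)) +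
   s * F1 v) = - (A * (x - v) + m * ((x - v) ^+ 2 / 2 - c * (x - v))) -
   s * (F1 v - F1 x - K * (v - x)) by [].
ring.
Qed.

Lemma taylor01 (F F1 F2 : R -> R) (K A m c x t : R) :
  @I01 R x -> @I01 R t -> deriv01 F F1 -> deriv01 F1 F2 ->
  (forall u, 0 < u < 1 -> `|F2 u - K| <= A + m * (`|u - x| - c)) ->
  `|F t - F x - F1 x * (t - x) - K * (t - x)^+2 / 2| <=
    A * `|t - x|^+2 / 2 + m * (`|t - x|^+3 / 6 - c * `|t - x|^+2 / 2).
Proof.
rewrite /I01 /= => /andP[x0 x1] /andP[t0 t1] hF hF1 hb.
have hs1 : (1:R) = 1 \/ (1:R) = -1 by left.
have hs2 : (-1:R) = 1 \/ (-1:R) = -1 by right.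
have [xt|tx] := leP x t.
  have ht : `|t - x| = t - x by rewrite ger0_norm // subr_ge0.
  rewrite ht.
  have hb' : forall u, x < u < t -> `|F2 u - K| <= A + m * ((u - x) - c).
    move=> u /andP[xu ut].
    have e : `|u - x| = u - x by rewrite ger0_norm // subr_ge0 ltW.
    rewrite -e; apply: hb.
    by apply/andP; split; [exact: le_lt_trans xu|exact: lt_le_trans t1].
  apply/ler_normlP; split.
    have := taylor_right_s x0 xt t1 hF hF1 hs2 hb'.
    by rewrite mulN1r.
  have := taylor_right_s x0 xt t1 hF hF1 hs1 hb'.
  by rewrite mul1r.
have ht : `|t - x| = x - t by rewrite ltr0_norm ?subr_lt0 // opprB.
rewrite ht.
have hb' : forall u, t < u < x -> `|F2 u - K| <= A + m * ((x - u) - c).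
  move=> u /andP[tu ux].
  have e : `|u - x| = x - u by rewrite ltr0_norm ?subr_lt0 // opprB.
  rewrite -e; apply: hb.
  by apply/andP; split; [exact: le_lt_trans tu|exact: lt_le_trans x1].
have tx' := ltW tx.
apply/ler_normlP; split.
  have := taylor_left_s t0 tx' x1 hF hF1 hs2 hb'.
  by rewrite mulN1r.
have := taylor_left_s t0 tx' x1 hF hF1 hs1 hb'.
by rewrite mul1r.
Qed.

End P2.

Section P3.
Variable R : realType.

Definition pb (n k : nat) (x : R) : R := ('C(n, k))%:R * x ^+ k * (1 - x) ^+ (n - k).

Lemma sum_pb n (x : R) : \sum_(k < n.+1) pb n k x = 1.
Proof.
have := exprDn (1 - x) x n; rewrite subrK expr1n => ->.
apply: eq_bigr => k _; rewrite /pb -mulr_natl; ring.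
Qed.

Lemma bern_T (x : R) j n :
  \sum_(k < n.+1) pb n k x * (k ^_ j)%:R = (n ^_ j)%:R * x ^+ j.
Proof.
elim: j n => [|j IH] n.
  by rewrite ffactn0 mul1r expr0; under eq_bigr do rewrite mulr1; exact: sum_pb.
case: n => [|m].
  by rewrite big_ord_recl big_ord0 /= ffact0n /= mulr0 mul0r addr0.
rewrite big_ord_recl /= ffact0n /= mulr0 add0r.
rewrite ffactSS natrM exprS.
have -> : (m.+1%:R * (m ^_ j)%:R * (x * x ^+ j) : R) = m.+1%:R * x * ((m ^_ j)%:R * x ^+ j) by ring.
rewrite -IH mulr_sumr; apply: eq_bigr => i _.
rewrite /pb /bump /= ffactSS.
have e := mul_bin_diag m.+1 i; rewrite /= in e.
rewrite subSS !natrM exprS.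
have -> : ('C(m.+1, i.+1)%:R * (x * x ^+ i) * (1 - x) ^+ (m - i) * (i.+1%:R * (i ^_ j)%:R) : R)
   = (i.+1 * 'C(m.+1, i.+1))%:R * x * x ^+ i * (1 - x) ^+ (m - i) * (i ^_ j)%:R
   by rewrite natrM; ring.
rewrite -e natrM; ring.
Qed.


Lemma ffact_real k j : ((k ^_ j)%:R : R) = \prod_(i < j) (k%:R - i%:R).
Proof.
elim: j k => [|j IH] k; first by rewrite big_ord0.
rewrite big_ord_recl /= subr0 ffactnS natrM; case: k => [|k].
  by rewrite !mul0r.
rewrite /= IH; congr (_ * _); apply: eq_bigr => i _.
by rewrite /bump /= natrD -natr1; ring.
Qed.

Lemma mom_comb n (x a0 a1 a2 a3 a4 : R) :
  \sum_(k < n.+1) pb n k x * (a0 + a1 * k%:R + a2 * (k%:R * (k%:R - 1))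
     + a3 * (k%:R * (k%:R - 1) * (k%:R - 2%:R))
     + a4 * (k%:R * (k%:R - 1) * (k%:R - 2%:R) * (k%:R - 3%:R))) =
  a0 + a1 * (n%:R * x) + a2 * (n%:R * (n%:R - 1) * x ^+ 2)
   + a3 * (n%:R * (n%:R - 1) * (n%:R - 2%:R) * x ^+ 3)
   + a4 * (n%:R * (n%:R - 1) * (n%:R - 2%:R) * (n%:R - 3%:R) * x ^+ 4).
Proof.
have T j c : \sum_(k < n.+1) pb n k x * (c * (k ^_ j)%:R) = c * ((n ^_ j)%:R * x ^+ j).
  by rewrite -bern_T mulr_sumr; apply: eq_bigr => k _; ring.
have P j m : ((m ^_ j)%:R : R) = \prod_(i < j) (m%:R - i%:R) by exact: ffact_real.
have E : forall m : nat, ((m ^_ 0)%:R = (1:R)) /\ ((m ^_ 1)%:R = (m%:R : R)) /\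
   ((m ^_ 2)%:R = (m%:R * (m%:R - 1) : R)) /\
   ((m ^_ 3)%:R = (m%:R * (m%:R - 1) * (m%:R - 2%:R) : R)) /\
   ((m ^_ 4)%:R = (m%:R * (m%:R - 1) * (m%:R - 2%:R) * (m%:R - 3%:R) : R)).
  move=> m; rewrite !P !big_ord_recr !big_ord0 /=; split; first by [].
  by split; [ring|split; [ring|split; ring]].
rewrite (eq_bigr (fun k : 'I_n.+1 => pb n k x * (a0 * (k ^_ 0)%:R) + pb n k x * (a1 * (k ^_ 1)%:R)
   + pb n k x * (a2 * (k ^_ 2)%:R) + pb n k x * (a3 * (k ^_ 3)%:R) + pb n k x * (a4 * (k ^_ 4)%:R))); last first.
  move=> k _; have [e0 [e1 [e2 [e3 e4]]]] := E k; rewrite e0 e1 e2 e3 e4; ring.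
rewrite !big_split /= !T.
have [n0 [n1 [n2 [n3 n4]]]] := E n.
rewrite n0 n1 n2 n3 n4; ring.
Qed.


Lemma mom_gen n (x : R) (g : R -> R) (a0 a1 a2 a3 a4 : R) :
  (forall K, g K = a0 + a1 * K + a2 * (K * (K - 1)) + a3 * (K * (K - 1) * (K - 2%:R))
     + a4 * (K * (K - 1) * (K - 2%:R) * (K - 3%:R))) ->
  \sum_(k < n.+1) pb n k x * g k%:R =
  a0 + a1 * (n%:R * x) + a2 * (n%:R * (n%:R - 1) * x ^+ 2)
   + a3 * (n%:R * (n%:R - 1) * (n%:R - 2%:R) * x ^+ 3)
   + a4 * (n%:R * (n%:R - 1) * (n%:R - 2%:R) * (n%:R - 3%:R) * x ^+ 4).
Proof.
move=> hg; rewrite -mom_comb; apply: eq_bigr => k _; by rewrite hg.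
Qed.

Lemma mom1 n (x : R) : (0 < n)%N ->
  \sum_(k < n.+1) pb n k x * (k%:R / n%:R - x) = 0.
Proof.
move=> n0; have nz : (n%:R : R) != 0 by rewrite pnatr_eq0 -lt0n.
rewrite (@mom_gen n x (fun K => K / n%:R - x) (- x) (1 / n%:R) 0 0 0).
  by field.
by move=> K; field.
Qed.

Lemma mom2 n (x : R) : (0 < n)%N ->
  \sum_(k < n.+1) pb n k x * (k%:R / n%:R - x) ^+ 2 = x * (1 - x) / n%:R.
Proof.
move=> n0; have nz : (n%:R : R) != 0 by rewrite pnatr_eq0 -lt0n.
rewrite (@mom_gen n x (fun K => (K / n%:R - x) ^+ 2) (x ^+ 2)
   ((1 - 2%:R * n%:R * x) / n%:R ^+ 2) (1 / n%:R ^+ 2) 0 0).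
  by field.
by move=> K; field.
Qed.

Lemma mom4 n (x : R) : (0 < n)%N ->
  \sum_(k < n.+1) pb n k x * (k%:R / n%:R - x) ^+ 4 =
    x * (1 - x) * (3%:R * (n%:R - 2%:R) * x * (1 - x) + 1) / n%:R ^+ 3.
Proof.
move=> n0; have nz : (n%:R : R) != 0 by rewrite pnatr_eq0 -lt0n.
pose y := n%:R * x.
rewrite (@mom_gen n x (fun K => (K / n%:R - x) ^+ 4) (x ^+ 4)
   ((1 - 4%:R * y + 6%:R * y ^+ 2 - 4%:R * y ^+ 3) / n%:R ^+ 4)
   ((7%:R - 12%:R * y + 6%:R * y ^+ 2) / n%:R ^+ 4)
   ((6%:R - 4%:R * y) / n%:R ^+ 4) (1 / n%:R ^+ 4)).
  by rewrite /y; field.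
by move=> K; rewrite /y; field.
Qed.

Lemma pb_ge0 n k (x : R) : 0 <= x <= 1 -> 0 <= pb n k x.
Proof.
move=> /andP[x0 x1]; rewrite /pb mulr_ge0 ?mulr_ge0 ?exprn_ge0 ?ler0n //.
by rewrite subr_ge0.
Qed.

Lemma pt_cube (s d : R) : 0 < s ->
  `|d| ^+ 3 <= (d ^+ 2 / s + s * d ^+ 4) / 2.
Proof.
move=> s0.
have h : 0 <= d ^+ 2 * (1 - s * `|d|) ^+ 2 by rewrite mulr_ge0 ?sqr_ge0.
have e2 : `|d| ^+ 2 = d ^+ 2 by rewrite real_normK ?num_real.
have e4 : d ^+ 4 = `|d| ^+ 4 by rewrite (_ : 4%N = (2 * 2)%N) // !exprM e2.
rewrite -e2 e4.
rewrite -subr_ge0.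
have -> : (`|d| ^+ 2 / s + s * `|d| ^+ 4) / 2 - `|d| ^+ 3 =
   (`|d| ^+ 2 * (1 - s * `|d|) ^+ 2) / (2 * s).
  by field; rewrite gt_eqF.
apply: divr_ge0; [exact: mulr_ge0 (sqr_ge0 _) (sqr_ge0 _) | by rewrite mulr_ge0 // ltW].
Qed.

Lemma mom3 n (x : R) : (0 < n)%N -> 0 <= x <= 1 ->
  \sum_(k < n.+1) pb n k x * `|k%:R / n%:R - x| ^+ 3 <=
    x * (1 - x) / n%:R / Num.sqrt n%:R.
Proof.
move=> n0 hx; have n0' : (0 : R) < n%:R by rewrite ltr0n.
set s := Num.sqrt (n%:R : R).
have s0 : 0 < s by rewrite sqrtr_gt0.
have ss : s ^+ 2 = n%:R by rewrite sqr_sqrtr // ltW.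
apply: (@le_trans _ _ (\sum_(k < n.+1) pb n k x *
    (((k%:R / n%:R - x) ^+ 2 / s + s * (k%:R / n%:R - x) ^+ 4) / 2))).
  by apply: ler_sum => k _; apply: ler_wpM2l; [exact: pb_ge0|exact: pt_cube].
have -> : \sum_(k < n.+1) pb n k x *
    (((k%:R / n%:R - x) ^+ 2 / s + s * (k%:R / n%:R - x) ^+ 4) / 2) =
  ((\sum_(k < n.+1) pb n k x * (k%:R / n%:R - x) ^+ 2) / s +
    s * \sum_(k < n.+1) pb n k x * (k%:R / n%:R - x) ^+ 4) / 2.
  rewrite mulr_suml mulr_sumr -big_split /= mulr_suml.
  by apply: eq_bigr => k _; field; rewrite !gt_eqF.
rewrite mom2 // mom4 //.
have hu : 0 <= x * (1 - x) by case/andP: hx => a b; rewrite mulr_ge0 // subr_ge0.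
have hu4 : x * (1 - x) <= 1 / 4%:R.
  rewrite -subr_ge0.
  have -> : 1 / 4%:R - x * (1 - x) = (x - 1 / 2) ^+ 2 by field.
  exact: sqr_ge0.
have key : x * (1 - x) * (3%:R * (n%:R - 2%:R) * x * (1 - x) + 1) / n%:R ^+ 3 <=
    x * (1 - x) / n%:R / n%:R.
  have n1 : (1 : R) <= n%:R by rewrite ler1n.
  rewrite -subr_ge0.
  have -> : x * (1 - x) / n%:R / n%:R -
      x * (1 - x) * (3%:R * (n%:R - 2%:R) * x * (1 - x) + 1) / n%:R ^+ 3 =
      x * (1 - x) * (n%:R - 3%:R * (n%:R - 2%:R) * (x * (1 - x)) - 1) / n%:R ^+ 3.
    by field; rewrite gt_eqF.
  apply: divr_ge0; last by rewrite exprn_ge0 // ltW.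
  apply: mulr_ge0 => //.
  nra.
apply: (@le_trans _ _ ((x * (1 - x) / n%:R / s + s * (x * (1 - x) / n%:R / n%:R)) / 2)).
  by rewrite ler_pM2r ?invr_gt0 // lerD2l ler_wpM2l // ltW.
rewrite -ss le_eqVlt; apply/orP; left; apply/eqP; field. by rewrite gt_eqF.
Qed.
End P3.

Section P4.
Variable R : realType.

Lemma tk_I01 n (k : 'I_n.+1) : (0 < n)%N -> @I01 R (k%:R / n%:R).
Proof.
move=> n0; rewrite /I01 /=; apply/andP; split.
  by rewrite divr_ge0 ?ler0n.
rewrite ler_pdivrMr ?ltr0n // mul1r ler_nat.
by rewrite -ltnS ltn_ord.
Qed.

Lemma voron (F F1 F2 : R -> R) n (x A m c0 K : R) :
  deriv01 F F1 -> deriv01 F1 F2 -> (0 < n)%N -> @I01 R x -> 0 <= m ->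
  c0 = 1 / (3%:R * Num.sqrt n%:R) ->
  (forall u, 0 < u < 1 -> `|F2 u - K| <= A + m * (`|u - x| - c0)) ->
  `|bernstein n F x - F x - x * (1 - x) / (2%:R * n%:R) * K| <=
    x * (1 - x) / (2%:R * n%:R) * A.
Proof.
move=> hF hF1 n0 Ix m0 ec hb.
have hx : 0 <= x <= 1 by exact: Ix.
have n0' : (0 : R) < n%:R by rewrite ltr0n.
have nz : (n%:R : R) != 0 by rewrite gt_eqF.
set d := fun k : nat => (k%:R / n%:R - x : R).
have eB : bernstein n F x - F x - x * (1 - x) / (2%:R * n%:R) * K =
   \sum_(k < n.+1) pb n k x * (F (k%:R / n%:R) - F x - F1 x * (k%:R / n%:R - x)
       - K * (k%:R / n%:R - x) ^+ 2 / 2%:R).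
  have h0 := sum_pb n x; have h1 := mom1 x n0; have h2 := mom2 x n0.
  rewrite (eq_bigr (fun k : 'I_n.+1 => pb n k x * F (k%:R / n%:R) -
     (pb n k x * F x + F1 x * (pb n k x * (k%:R / n%:R - x))) -
     K / 2%:R * (pb n k x * (k%:R / n%:R - x) ^+ 2))); last by move=> k _; ring.
  rewrite !sumrB big_split /= -!mulr_sumr -mulr_suml h0 h1 h2 /bernstein.
  have -> : \sum_(k < n.+1) pb n k x * F (k%:R / n%:R) =
    \sum_(k < n.+1) ('C(n, k))%:R * x ^+ k * (1 - x) ^+ (n - k) * F (k%:R / n%:R) by [].
  by field.
rewrite eB.
apply: (le_trans (ler_norm_sum _ _ _)).
apply: (@le_trans _ _ (\sum_(k < n.+1) pb n k x *
   (A * `|k%:R / n%:R - x| ^+ 2 / 2%:R + m * (`|k%:R / n%:R - x| ^+ 3 / 6%:R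
      - c0 * `|k%:R / n%:R - x| ^+ 2 / 2%:R)))).
  apply: ler_sum => k _.
  rewrite normrM ger0_norm ?pb_ge0 //.
  apply: ler_wpM2l; first exact: pb_ge0.
  exact: (taylor01 Ix (tk_I01 k n0) hF hF1 hb).
have e2 : forall k : 'I_n.+1, `|k%:R / n%:R - x| ^+ 2 = (k%:R / n%:R - x) ^+ 2.
  by move=> k; rewrite real_normK ?num_real.
under eq_bigr do rewrite e2.
have -> : \sum_(k < n.+1) pb n k x *
   (A * (k%:R / n%:R - x) ^+ 2 / 2%:R + m * (`|k%:R / n%:R - x| ^+ 3 / 6%:R
      - c0 * (k%:R / n%:R - x) ^+ 2 / 2%:R)) =
   (A - m * c0) / 2%:R * (\sum_(k < n.+1) pb n k x * (k%:R / n%:R - x) ^+ 2)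
   + m / 6%:R * (\sum_(k < n.+1) pb n k x * `|k%:R / n%:R - x| ^+ 3).
  rewrite !mulr_sumr -big_split /=; apply: eq_bigr => k _; ring.
rewrite mom2 //.
have h3 := mom3 n0 hx.
have s0 : (0 : R) < Num.sqrt n%:R by rewrite sqrtr_gt0.
rewrite -subr_ge0.
have -> : x * (1 - x) / (2%:R * n%:R) * A -
   ((A - m * c0) / 2%:R * (x * (1 - x) / n%:R) +
    m / 6%:R * \sum_(k < n.+1) pb n k x * `|k%:R / n%:R - x| ^+ 3) =
   m / 6%:R * (x * (1 - x) / n%:R / Num.sqrt n%:R -
      \sum_(k < n.+1) pb n k x * `|k%:R / n%:R - x| ^+ 3).
  by rewrite ec; field; rewrite !gt_eqF.
by rewrite mulr_ge0 ?divr_ge0 // subr_ge0.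
Qed.

End P4.

Section P5.
Variable R : realType.

Lemma bounded_cont (F : R -> R) : {within @I01 R, continuous F} ->
  exists B : R, forall u, @I01 R u -> `|F u| <= B.
Proof.
move=> hc.
have hc' : {within `[(0:R), 1], continuous F}.
  by apply: (continuous_subspaceW (I01_itv (lexx 0) (lexx 1))).
have [M Mi HM] := EVT_max ler01 hc'.
have [m mi Hm] := EVT_min ler01 hc'.
exists (`|F M| + `|F m|) => u Iu.
have ui : u \in `[(0:R), 1] by rewrite in_itv /=; exact: Iu.
have h1 := HM u ui; have h2 := Hm u ui.
have a := ler_norm (- F m); rewrite normrN in a.
have b := ler_norm (F M).
have c := normr_ge0 (F M); have d := normr_ge0 (F m).
apply/ler_normlP; split; lra.
Qed.

Lemma unorm_ub (F : R -> R) B : (forall u, @I01 R u -> `|F u| <= B) ->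
  forall u, @I01 R u -> `|F u| <= unorm F.
Proof.
move=> hB u Iu; apply: ub_le_sup.
  by exists B => _ [v Iv <-]; exact: hB.
by exists u.
Qed.

Lemma unorm_ge0 (F : R -> R) B : (forall u, @I01 R u -> `|F u| <= B) ->
  0 <= unorm F.
Proof.
move=> hB; have I0 : @I01 R 0 by rewrite /I01 /= lexx ler01.
exact: le_trans (normr_ge0 _) (unorm_ub hB I0).
Qed.

Lemma omega_set_ub (F : R -> R) B s : (forall u, @I01 R u -> `|F u| <= B) ->
  has_ubound [set d | exists x y, [/\ @I01 R x, @I01 R y, `|x - y| <= s & d = `|F x - F y|]].
Proof.
move=> hB; exists (B + B) => _ [x [y [Ix Iy _ ->]]].
apply: (le_trans (ler_normB _ _)); apply: lerD; exact: hB.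
Qed.

Lemma omega_ub (F : R -> R) B u v : (forall u, @I01 R u -> `|F u| <= B) ->
  @I01 R u -> @I01 R v -> `|F u - F v| <= omega1 F `|u - v|.
Proof.
move=> hB Iu Iv; apply: ub_le_sup; first exact: omega_set_ub hB.
by exists u, v.
Qed.

Lemma omega_ge0 (F : R -> R) B s : (forall u, @I01 R u -> `|F u| <= B) ->
  0 <= s -> 0 <= omega1 F s.
Proof.
move=> hB s0; have I0 : @I01 R 0 by rewrite /I01 /= lexx ler01.
have := @omega_ub F B 0 0 hB I0 I0.
rewrite subrr normr0.
move=> h; apply: ub_le_sup; first exact: omega_set_ub hB.
exists 0, 0; split => //; first by rewrite subrr normr0.
by rewrite subrr normr0.
Qed.

Lemma omega_le2B (F : R -> R) B s : (forall u, @I01 R u -> `|F u| <= B) ->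
  0 <= s -> omega1 F s <= B + B.
Proof.
move=> hB s0; apply: ge_sup.
  have I0 : @I01 R 0 by rewrite /I01 /= lexx ler01.
  by exists 0, 0, 0; split => //; rewrite subrr normr0.
move=> _ [x [y [Ix Iy _ ->]]].
apply: (le_trans (ler_normB _ _)); apply: lerD; exact: hB.
Qed.


Lemma three_slope (phi : R -> R) v c w : concave_nonneg phi -> 0 <= v -> v < c -> c < w ->
  (phi w - phi c) / (w - c) <= (phi c - phi v) / (c - v).
Proof.
move=> hcon v0 vc cw.
have wv : 0 < w - v by rewrite subr_gt0; exact: lt_trans cw.
have wc : 0 < w - c by rewrite subr_gt0.
have cv : 0 < c - v by rewrite subr_gt0.
pose l := (w - c) / (w - v).
have hl : 0 <= l <= 1.
  apply/andP; split; first by rewrite divr_ge0 // ltW.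
  by rewrite ler_pdivrMr // mul1r lerD2l lerN2 ltW.
have H := hcon v w l v0 (le_trans v0 (ltW (lt_trans vc cw))) hl.
have e : l * v + (1 - l) * w = c by rewrite /l; field; rewrite gt_eqF.
rewrite e in H.
have key : (w - c) * phi v + (c - v) * phi w <= (w - v) * phi c.
  have -> : (w - c) * phi v + (c - v) * phi w = (w - v) * (l * phi v + (1 - l) * phi w).
    by rewrite /l; field; rewrite gt_eqF.
  by rewrite ler_pM2l.
rewrite -subr_ge0.
have -> : (phi c - phi v) / (c - v) - (phi w - phi c) / (w - c) =
   ((w - v) * phi c - ((w - c) * phi v + (c - v) * phi w)) / ((c - v) * (w - c)).
  by field; rewrite !gt_eqF.
by rewrite divr_ge0 ?subr_ge0 // mulr_ge0 // ltW.
Qed.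

Lemma supergrad (phi : R -> R) c : concave_nonneg phi -> 0 < c ->
  (forall s, 0 <= s -> 0 <= phi s) ->
  exists m, 0 <= m /\ forall v, 0 <= v -> phi v <= phi c + m * (v - c).
Proof.
move=> hcon c0 hpos.
pose S := [set (phi w - phi c) / (w - c) | w in [set w | c < w]].
have S0 : S !=set0.
  by exists ((phi (c + 1) - phi c) / (c + 1 - c)), (c + 1) => //=; rewrite ltrDl.
have Sub : ubound S ((phi c - phi 0) / (c - 0)).
  by move=> _ [w /= cw <-]; apply: three_slope.
have hS : has_ubound S by exists ((phi c - phi 0) / (c - 0)).
have H : forall v, 0 <= v -> phi v <= phi c + sup S * (v - c).
  move=> v v0; have [vc|cv|->] := ltgtP v c; last by rewrite subrr mulr0 addr0.
  - have : sup S <= (phi c - phi v) / (c - v).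
      apply: ge_sup => // _ [w /= cw <-]; exact: three_slope.
    have cvp : 0 < c - v by rewrite subr_gt0.
    rewrite ler_pdivlMr // => h.
    have -> : sup S * (v - c) = - (sup S * (c - v)) by rewrite -mulrN opprB.
    lra.
  - have : (phi v - phi c) / (v - c) <= sup S by apply: ub_le_sup => //; exists v.
    have vcp : 0 < v - c by rewrite subr_gt0.
    rewrite ler_pdivrMr // => h; lra.
exists (sup S); split => //.
rewrite leNgt; apply/negP => m0.
have pc := hpos c (ltW c0).
pose v := c + (phi c + 1) / (- sup S).
have v0 : 0 <= v.
  by rewrite /v addr_ge0 ?ltW // divr_gt0 // ?oppr_gt0 // ltr_pwDr.
have := H v v0; have := hpos v v0.
have -> : phi c + sup S * (v - c) = -1.
  by rewrite /v; field; rewrite lt_eqF.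
lra.
Qed.

Lemma voron_phi (F F1 F2 : R -> R) B n x (phi : R -> R) :
  deriv01 F F1 -> deriv01 F1 F2 -> (forall u, @I01 R u -> `|F2 u| <= B) ->
  (0 < n)%N -> @I01 R x -> concave_nonneg phi ->
  (forall s, 0 <= s -> omega1 F2 s <= phi s) ->
  `|bernstein n F x - F x - x * (1 - x) / (2%:R * n%:R) * F2 x| <=
    x * (1 - x) / (2%:R * n%:R) * phi (1 / (3%:R * Num.sqrt n%:R)).
Proof.
move=> hF hF1 hB n0 Ix hcon hmaj.
have c0 : (0 : R) < 1 / (3%:R * Num.sqrt n%:R).
  by rewrite divr_gt0 // mulr_gt0 // sqrtr_gt0 ltr0n.
have hpos : forall s, 0 <= s -> 0 <= phi s.
  move=> s s0; exact: le_trans (omega_ge0 hB s0) (hmaj s s0).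
have [m [m0 hm]] := supergrad hcon c0 hpos.
apply: (voron hF hF1 n0 Ix m0 (erefl _)).
move=> u /andP[u0 u1].
have Iu : @I01 R u by rewrite /I01 /= !ltW.
apply: (le_trans (omega_ub hB Iu Ix)).
apply: (le_trans (hmaj _ (normr_ge0 _))).
exact: hm.
Qed.

Lemma inf_step (F2 : R -> R) B t L K a : (forall u, @I01 R u -> `|F2 u| <= B) ->
  0 <= t -> 0 <= a ->
  (forall phi : R -> R, concave_nonneg phi -> (forall s, 0 <= s -> omega1 F2 s <= phi s) ->
     L <= K + a * phi t) ->
  L <= K + a * omega1_tilde F2 t.
Proof.
move=> hB t0 a0 H.
have ccon : concave_nonneg (fun _ : R => B + B).
  by move=> p q l _ _ _; rewrite le_eqVlt; apply/orP; left; apply/eqP; ring.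
have cmaj : forall s, 0 <= s -> omega1 F2 s <= (fun _ : R => B + B) s.
  by move=> s s0; exact: omega_le2B hB s0.
set E := [set phi t | phi in [set phi : R -> R | concave_nonneg phi /\
         (forall s, 0 <= s -> omega1 F2 s <= phi s)]].
have E0 : E !=set0 by exists (B + B), (fun _ => B + B).
rewrite /omega1_tilde -/E.
move: a0; rewrite le_eqVlt => /predU1P[e|a0].
  by have := H _ ccon cmaj; rewrite -e !mul0r.
have : (L - K) / a <= inf E.
  apply: lb_le_inf => // _ [phi [hc hm] <-].
  by rewrite ler_pdivrMr // mulrC lerBlDl; exact: H.
by rewrite ler_pdivrMr // mulrC lerBlDl.
Qed.
End P5.

Section P6.
Variable R : realType.

Lemma D_unique (F : R -> R) (x a b : R) : is_derive x 1 F a -> is_derive x 1 F b -> a = b.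
Proof. by move=> ha hb; rewrite -(@derive_val _ _ _ _ _ _ _ ha) -(@derive_val _ _ _ _ _ _ _ hb). Qed.

Lemma h2_formula (f f1 f2 g g1 g2 h1 h2 : R -> R) x :
  deriv01 f f1 -> deriv01 f1 f2 -> deriv01 g g1 -> deriv01 g1 g2 ->
  deriv01 (fun x => f x * g x) h1 -> deriv01 h1 h2 -> 0 < x < 1 ->
  h2 x = f2 x * g x + (f1 x * g1 x + f1 x * g1 x) + f x * g2 x.
Proof.
move=> hf1 hf2 hg1 hg2 hh1 hh2 hx.
have hd1 : forall u, 0 < u < 1 -> h1 u = f1 u * g u + f u * g1 u.
  move=> u hu.
  have Af := deriv01_is_derive hf1 hu.
  have Ag := deriv01_is_derive hg1 hu.
  have A2 : is_derive u 1 (fun y => f y * g y) (f1 u * g u + f u * g1 u).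
    by apply: is_derive_eq; rewrite /GRing.scale /=; ring.
  have A1 := deriv01_is_derive hh1 hu.
  exact: D_unique A1 A2.
have B1 := deriv01_is_derive hh2 hx.
have Af := deriv01_is_derive hf1 hx.
have Ag := deriv01_is_derive hg1 hx.
have Af1 := deriv01_is_derive hf2 hx.
have Ag1 := deriv01_is_derive hg2 hx.
have B2 : is_derive x 1 (fun y => f1 y * g y + f y * g1 y)
    (f2 x * g x + (f1 x * g1 x + f1 x * g1 x) + f x * g2 x).
  by apply: is_derive_eq; rewrite /GRing.scale /=; ring.
have B3 : is_derive x 1 h1 (f2 x * g x + (f1 x * g1 x + f1 x * g1 x) + f x * g2 x).
  apply: (near_eq_is_derive _ B2).
  case/andP: hx => x0 x1.
  apply/nbhs_ballP; exists (Num.min x (1 - x)) => /=.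
    by rewrite lt_min x0 subr_gt0.
  move=> y; rewrite /ball /= lt_min => /andP[a b].
  rewrite hd1 //.
  move: a b; rewrite !ltr_norml => /andP[a1 a2] /andP[b1 b2].
  apply/andP; split; lra.
exact: D_unique B1 B3.
Qed.

End P6.

Lemma normM_le (R : realType) (p q P Q : R) : `|p| <= P -> `|q| <= Q -> `|p * q| <= P * Q.
Proof.
move=> hp hq; rewrite normrM; apply: ler_pM => //; exact: normr_ge0.
Qed.

Unset Implicit Arguments. Set Strict Implicit.

Theorem theorem2p1 (R : realType) (f f1 f2 g g1 g2 h1 h2 : R -> R)
  (hf1 : deriv01 f f1) (hf2 : deriv01 f1 f2) (cf2 : {within (@I01 R), continuous f2})
  (hg1 : deriv01 g g1) (hg2 : deriv01 g1 g2) (cg2 : {within (@I01 R), continuous g2})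
  (hh1 : deriv01 (fun x => f x * g x) h1) (hh2 : deriv01 h1 h2)
  (n : nat) (hn : (0 < n)%N) (x : R) (hx : 0 <= x <= 1) :
  n%:R * `| bernstein n (fun y => f y * g y) x
            - bernstein n f x * bernstein n g x
            - x * (1 - x) / n%:R * f1 x * g1 x |
  <= x * (1 - x) / 2 *
     (omega1_tilde h2 (1 / (3 * Num.sqrt n%:R))
      + unorm g * omega1_tilde f2 (1 / (3 * Num.sqrt n%:R))
      + unorm f * omega1_tilde g2 (1 / (3 * Num.sqrt n%:R))
      + 1 / (2 * n%:R) * unorm f2 * unorm g2).
Proof.
have Ix : @I01 R x by exact: hx.
have n0 : (0 : R) < n%:R by rewrite ltr0n.
have I0 : @I01 R 0 by rewrite /I01 /= lexx ler01.
have I1 : @I01 R 1 by rewrite /I01 /= lexx ler01.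
have [Bf2 hBf2] := bounded_cont cf2.
have [Bg2 hBg2] := bounded_cont cg2.
have [Bf hBf] := bounded_cont (deriv01_cont hf1).
have [Bg hBg] := bounded_cont (deriv01_cont hg1).
have [Bf1 hBf1] := bounded_cont (deriv01_cont hf2).
have [Bg1 hBg1] := bounded_cont (deriv01_cont hg2).
pose Bh := `|h2 0| + `|h2 1| + (Bf2 * Bg + (Bf1 * Bg1 + Bf1 * Bg1) + Bf * Bg2).
have hBh : forall u, @I01 R u -> `|h2 u| <= Bh.
  move=> u Iu.
  have p0 : 0 <= `|h2 0| by [].
  have p1 : 0 <= `|h2 1| by [].
  have q0 : 0 <= Bf2 * Bg + (Bf1 * Bg1 + Bf1 * Bg1) + Bf * Bg2.
    have a1 := le_trans (normr_ge0 _) (hBf2 0 I0).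
    have a2 := le_trans (normr_ge0 _) (hBg 0 I0).
    have a3 := le_trans (normr_ge0 _) (hBf1 0 I0).
    have a4 := le_trans (normr_ge0 _) (hBg1 0 I0).
    have a5 := le_trans (normr_ge0 _) (hBf 0 I0).
    have a6 := le_trans (normr_ge0 _) (hBg2 0 I0).
    by rewrite !addr_ge0 ?mulr_ge0.
  have [->|u0] := eqVneq u 0; first by rewrite /Bh; lra.
  have [->|u1] := eqVneq u 1; first by rewrite /Bh; lra.
  have hu : 0 < u < 1.
    by case/andP: Iu => a b; rewrite !lt_neqAle a b eq_sym u0 u1.
  rewrite (h2_formula hf1 hf2 hg1 hg2 hh1 hh2 hu).
  have : `|f2 u * g u + (f1 u * g1 u + f1 u * g1 u) + f u * g2 u| <=
      Bf2 * Bg + (Bf1 * Bg1 + Bf1 * Bg1) + Bf * Bg2.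
    apply: (le_trans (ler_normD _ _)); apply: lerD; last exact: normM_le (hBf _ Iu) (hBg2 _ Iu).
    apply: (le_trans (ler_normD _ _)); apply: lerD; first exact: normM_le (hBf2 _ Iu) (hBg _ Iu).
    apply: (le_trans (ler_normD _ _)); apply: lerD; exact: normM_le (hBf1 _ Iu) (hBg1 _ Iu).
  rewrite /Bh; lra.
set c0 := 1 / (3 * Num.sqrt (n%:R : R)).
have c0p : 0 <= c0 by rewrite /c0 divr_ge0 // mulr_ge0 // sqrtr_ge0.
set C := x * (1 - x) / 2.
have Cp : 0 <= C by case/andP: hx => a b; rewrite /C divr_ge0 // mulr_ge0 // subr_ge0.
set uf := unorm f; set ug := unorm g; set uf2 := unorm f2; set ug2 := unorm g2.
have ufp : 0 <= uf := unorm_ge0 hBf.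
have ugp : 0 <= ug := unorm_ge0 hBg.
have uf2p : 0 <= uf2 := unorm_ge0 hBf2.
have ug2p : 0 <= ug2 := unorm_ge0 hBg2.
set r := 1 / (2 * n%:R) * uf2 * ug2.
set inner := bernstein n (fun y => f y * g y) x - bernstein n f x * bernstein n g x
            - x * (1 - x) / n%:R * f1 x * g1 x.
set Oh := omega1_tilde h2 c0; set Of := omega1_tilde f2 c0; set Og := omega1_tilde g2 c0.
have -> : C * (Oh + ug * Of + uf * Og + r) = C * (ug * Of + uf * Og + r) + C * Oh by ring.
apply: (inf_step hBh c0p Cp) => ph hcph hmph.
have -> : C * (ug * Of + uf * Og + r) + C * ph c0 = C * (ph c0 + uf * Og + r) + (C * ug) * Of
  by ring.
apply: (inf_step hBf2 c0p (mulr_ge0 Cp ugp)) => pf hcpf hmpf.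
have -> : C * (ph c0 + uf * Og + r) + C * ug * pf c0 = C * (ph c0 + ug * pf c0 + r) + (C * uf) * Og
  by ring.
apply: (inf_step hBg2 c0p (mulr_ge0 Cp ufp)) => pg hcpg hmpg.
set a := x * (1 - x) / (2 * n%:R).
have ap : 0 <= a by case/andP: hx => p q; rewrite /a divr_ge0 // ?mulr_ge0 // subr_ge0.
have phg : forall (F : R -> R) B (phi : R -> R), (forall u, @I01 R u -> `|F u| <= B) ->
    (forall s, 0 <= s -> omega1 F s <= phi s) -> 0 <= phi c0.
  by move=> F B phi hB hm; exact: le_trans (omega_ge0 hB c0p) (hm _ c0p).
have php := phg _ _ _ hBh hmph.
have pfp := phg _ _ _ hBf2 hmpf.
have pgp := phg _ _ _ hBg2 hmpg.
have e1 : `|bernstein n (fun y => f y * g y) x - f x * g x - a * h2 x| <= a * ph c0.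
  exact: (voron_phi hh1 hh2 hBh hn Ix hcph hmph).
have e3 : `|bernstein n f x - f x - a * f2 x| <= a * pf c0.
  exact: (voron_phi hf1 hf2 hBf2 hn Ix hcpf hmpf).
have e2 : `|bernstein n g x - g x - a * g2 x| <= a * pg c0.
  exact: (voron_phi hg1 hg2 hBg2 hn Ix hcpg hmpg).
have d1 : `|bernstein n f x - f x| <= a * uf2.
  have := @voron R f f1 f2 n x uf2 0 c0 0 hf1 hf2 hn Ix (lexx 0) (erefl _).
  rewrite mulr0 subr0; apply => u /andP[u0 u1].
  rewrite subr0 mul0r addr0; apply: (unorm_ub hBf2).
  by rewrite /I01 /= !ltW.
have d2 : `|bernstein n g x - g x| <= a * ug2.
  have := @voron R g g1 g2 n x ug2 0 c0 0 hg1 hg2 hn Ix (lexx 0) (erefl _).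
  rewrite mulr0 subr0; apply => u /andP[u0 u1].
  rewrite subr0 mul0r addr0; apply: (unorm_ub hBg2).
  by rewrite /I01 /= !ltW.
have brk : a * (h2 x - (f2 x * g x + (f1 x * g1 x + f1 x * g1 x) + f x * g2 x)) = 0.
  rewrite /a; have [->|x0] := eqVneq x 0; first by rewrite !mul0r.
  have [->|x1] := eqVneq x 1; first by rewrite subrr mulr0 !mul0r.
  have hu : 0 < x < 1.
    by case/andP: hx => p q; rewrite !lt_neqAle p q eq_sym x0 x1.
  by rewrite (h2_formula hf1 hf2 hg1 hg2 hh1 hh2 hu) subrr mulr0.
have eI : inner = (bernstein n (fun y => f y * g y) x - f x * g x - a * h2 x)
   - f x * (bernstein n g x - g x - a * g2 x)
   - g x * (bernstein n f x - f x - a * f2 x)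
   - (bernstein n f x - f x) * (bernstein n g x - g x)
   + a * (h2 x - (f2 x * g x + (f1 x * g1 x + f1 x * g1 x) + f x * g2 x)).
  rewrite /inner /a; field; by rewrite gt_eqF.
have bI : `|inner| <= a * ph c0 + uf * (a * pg c0) + ug * (a * pf c0) + (a * uf2) * (a * ug2).
  rewrite eI brk addr0.
  apply: (le_trans (ler_normB _ _)); apply: lerD; last exact: normM_le d1 d2.
  apply: (le_trans (ler_normB _ _)); apply: lerD; last first.
    by apply: normM_le e3; apply: (unorm_ub hBg).
  apply: (le_trans (ler_normB _ _)); apply: lerD => //.
  by apply: normM_le e2; apply: (unorm_ub hBf).
apply: (le_trans (ler_wpM2l (ler0n _ n) bI)).
have ax : x * (1 - x) <= 1.
  case/andP: hx => p q; have : 0 <= 1 - x by rewrite subr_ge0.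
  move=> h; nra.
rewrite -subr_ge0.
have -> : C * (ph c0 + ug * pf c0 + r) + C * uf * pg c0 -
   n%:R * (a * ph c0 + uf * (a * pg c0) + ug * (a * pf c0) + a * uf2 * (a * ug2)) =
   C * uf2 * ug2 * ((1 - x * (1 - x)) / (2 * n%:R)).
  by rewrite /C /r /a; field; rewrite gt_eqF.
apply: mulr_ge0; first exact: (mulr_ge0 (mulr_ge0 Cp uf2p) ug2p).
apply: divr_ge0; first by rewrite subr_ge0.
by rewrite mulr_ge0 // ltW.
Qed.
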